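(* Let $G$ be a group and let $\omega$ be a weight on $G$ which is not strongly non-amenable; let $\mathcal A=l^1(G,\omega)$. Let $\phi:\mathcal B(\mathcal A,c_0(G))\to c_0(G)$ be a bounded left $\mathcal A$-module homomorphism, and let $M\in\mathcal B(\mathcal A,c_0(G))'$ be defined by $\langle M,T\rangle=\langle\delta_{e_G},\phi(T)\rangle$. Then $M$ vanishes on every $T\in\mathcal B(\mathcal A,c_0(G))$ whose matrix $(\langle\delta_s,T(\delta_t)\rangle)_{(s,t)\in G\times G}$ lies in $c_0(G\times G)$.
   Context: Weight: $\omega:G\to(0,\infty)$, $\omega(st)\le\omega(s)\omega(t)$, $\omega(e_G)=1$; $\Omega(g,h)=\omega(gh)\omega(g)^{-1}\omega(h)^{-1}$; $l^1(G,\omega)$ is $l^1(G)$ with $\delta_g\star\delta_h=\Omega(g,h)\delta_{gh}$, dual $l^\infty(G)$ with $\langle f,\delta_g\rangle=f_g$. $c_0(G)$ is a left $\mathcal A$-module via $\langle a\cdot\mu,b\rangle=\mu(ba)$. $\mathcal B(\mathcal A,c_0(G))$ is a left $\mathcal A$-module via $(a\cdot T)(b)=T(ba)$. The weight is strongly non-amenable if for every $\epsilon>0$ the set $\{g:\omega(g)\omega(g^{-1})<\epsilon^{-1}\}$ is finite; so ''not strongly non-amenable'' means there is $K>0$ with $\{g:\omega(g)\omega(g^{-1})\le K\}$ infinite. *)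

(* Defs.v *)
From HB Require Import structures.
From mathcomp Require Import all_boot all_order all_algebra.
From mathcomp Require Import boolp classical_sets cardinality reals.
From mathcomp Require Import complex.

Set Implicit Arguments.
Unset Strict Implicit.
Unset Printing Implicit Defensive.

Import Order.TTheory GRing.Theory Num.Theory.
Local Open Scope ring_scope.
Local Open Scope classical_set_scope.
Local Open Scope complex_scope.

Record group_str (G : choiceType) := GroupStr {
  gmul : G -> G -> G;
  ginv : G -> G;
  gone : G;
  gmulA : forall x y z, gmul x (gmul y z) = gmul (gmul x y) z;
  gmul1 : forall x, gmul gone x = x;
  gmulV : forall x, gmul (ginv x) x = gone
}.

Section WeightedL1.
Variables (R : realType) (G : choiceType) (gs : group_str G).
Local Notation K := (complex R).
Local Notation "x * y" := (gmul gs x y) : gp_scope.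
Local Notation "x ^-1" := (ginv gs x) : gp_scope.
Local Notation e := (gone gs).
Declare Scope gp_scope.
Delimit Scope gp_scope with gp.

Definition is_weight (w : G -> R) : Prop :=
  [/\ (forall g, 0 < w g),
      (forall s t, w (s * t)%gp <= w s * w t) & w e = 1].

Definition strongly_non_amenable (w : G -> R) : Prop :=
  forall eps : R, 0 < eps -> finite_set [set g | w g * w (g^-1)%gp < eps^-1].

Definition Omega (w : G -> R) (g h : G) : R := w (g * h)%gp / (w g * w h).

Definition HasSum (I : choiceType) (f : I -> K) (s : K) : Prop :=
  forall eps : K, 0 < eps -> exists F0 : seq I, forall F : seq I,
    uniq F -> {subset F0 <= F} -> `| \sum_(x <- F) f x - s | < eps.

(* the sum (0 if f is not summable) *)
Definition sumG (I : choiceType) (f : I -> K) : K := xget 0 [set s | HasSum f s].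

Definition l1 (a : G -> K) : Prop :=
  exists B : K, forall F : seq G, uniq F -> \sum_(x <- F) `|a x| <= B.

Definition l1norm (a : G -> K) : K := sumG (fun g => `|a g|).

Definition c0 (I : choiceType) (f : I -> K) : Prop :=
  forall eps : K, 0 < eps -> finite_set [set i | eps <= `|f i|].

Definition delta (g : G) : G -> K := fun h => if h == g then 1 else 0.

(* product of l^1(G,omega): delta_g * delta_h = Omega(g,h) delta_{gh}, i.e.
   (b * a)(k) = sum_g b(g) a(g^-1 k) Omega(g, g^-1 k) *)
Definition conv (w : G -> R) (b a : G -> K) : G -> K :=
  fun k => sumG (fun g => b g * a (g^-1 * k)%gp * (Omega w g (g^-1 * k)%gp)%:C).

(* duality <f, b> = sum_g f(g) b(g), between l^oo(G) (containing c_0(G))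
   and l^1(G); in particular <f, delta_g> = f(g) *)
Definition pair (f b : G -> K) : K := sumG (fun g => f g * b g).

(* left A-module structure on c_0(G) : <a . mu, b> = mu(b * a); as an element
   of l^oo(G) = A', a . mu is determined by its values on the delta_g *)
Definition act_c0 (w : G -> R) (a mu : G -> K) : G -> K :=
  fun g => pair mu (conv w (delta g) a).

(* bounded operators A -> c_0(G), represented by functions on G -> K whose
   relevant behaviour is on l^1(G): linear on l^1, with values in c_0(G), and
   bounded: ||T a||_oo <= D ||a||_1 *)
Definition op_bound (T : (G -> K) -> (G -> K)) (D : K) : Prop :=
  forall a, l1 a -> forall s, `|T a s| <= D * l1norm a.

Definition is_bounded_op (T : (G -> K) -> (G -> K)) : Prop :=
  [/\ (forall a b, l1 a -> l1 b -> T (a \+ b) = T a \+ T b),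
      (forall (c : K) a, l1 a -> T (fun g => c * a g) = (fun g => c * T a g)),
      (forall a, l1 a -> c0 (T a)) &
      exists D : K, op_bound T D].

Definition act_B (w : G -> R) (a : G -> K) (T : (G -> K) -> (G -> K)) :
  (G -> K) -> (G -> K) := fun b => T (conv w b a).

Definition is_bounded_module_hom (w : G -> R)
    (phi : ((G -> K) -> (G -> K)) -> (G -> K)) : Prop :=
  [/\ (forall T, is_bounded_op T -> c0 (phi T)),
      (forall T S, is_bounded_op T -> is_bounded_op S ->
          phi (fun a => T a \+ S a) = phi T \+ phi S),
      (forall (c : K) T, is_bounded_op T ->
          phi (fun a g => c * T a g) = (fun g => c * phi T g)),
      (exists C : K, forall T D, is_bounded_op T -> 0 <= D -> op_bound T D ->
          forall g, `|phi T g| <= C * D) &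
      (forall a T, l1 a -> is_bounded_op T -> phi (act_B w a T) = act_c0 w a (phi T))].

Definition op_matrix (T : (G -> K) -> (G -> K)) : (G * G)%type -> K :=
  fun p => pair (T (delta p.2)) (delta p.1).

End WeightedL1.

(* Main.v *)
Require Import Defs.
From HB Require Import structures.
From mathcomp Require Import all_boot all_order all_algebra.
From mathcomp Require Import boolp classical_sets cardinality reals.
From mathcomp Require Import complex.
From mathcomp Require Import lra.
Import Order.TTheory GRing.Theory Num.Theory.
Local Open Scope ring_scope.
Local Open Scope complex_scope.
Set Implicit Arguments.
Unset Strict Implicit.
Unset Printing Implicit Defensive.

Section Sums.
Variable R : realType.
Local Notation K := (complex R).

Definition nc (z : K) : R := Num.sqrt (complex.Re z ^+ 2 + complex.Im z ^+ 2).

Lemma normcC (z : K) : `|z| = (nc z)%:C.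
Proof. by rewrite normc_def. Qed.

Lemma nc_ge0 (z : K) : 0 <= nc z.
Proof. exact: sqrtr_ge0. Qed.

Lemma ncD (x y : K) : nc (x + y) <= nc x + nc y.
Proof. by rewrite -lecR -!normcC rmorphD /= -!normcC ler_normD. Qed.

Lemma ncM (x y : K) : nc (x * y) = nc x * nc y.
Proof. by apply: complexI; rewrite rmorphM /= -!normcC normrM. Qed.

Lemma ncN (x : K) : nc (- x) = nc x.
Proof. by apply: complexI; rewrite -!normcC normrN. Qed.

Lemma ncB (x y : K) : nc (x - y) = nc (y - x).
Proof. by rewrite -ncN opprB. Qed.

Lemma nc0 : nc 0 = 0.
Proof. by apply: complexI; rewrite -!normcC normr0. Qed.

Lemma nc1 : nc 1 = 1.
Proof. by apply: complexI; rewrite -!normcC normr1. Qed.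

Lemma ncR (r : R) : nc r%:C = `|r|.
Proof. by rewrite /nc /= expr0n /= addr0 sqrtr_sqr. Qed.

Lemma nc_eq0 (z : K) : (nc z == 0) = (z == 0).
Proof.
apply/eqP/eqP => [h|->]; last exact: nc0.
by apply/eqP; rewrite -normr_eq0 normcC h.
Qed.

Lemma nc_sum (I : Type) (s : seq I) (f : I -> K) :
  nc (\sum_(x <- s) f x) <= \sum_(x <- s) nc (f x).
Proof.
elim: s => [|x s IH]; first by rewrite !big_nil nc0.
rewrite !big_cons; apply: le_trans (ncD _ _) _; exact: lerD.
Qed.

Lemma ltC_real (eps : K) : 0 < eps -> eps = (complex.Re eps)%:C /\ 0 < complex.Re eps.
Proof.
rewrite ltcE /= => /andP[/eqP Him Hre]; split => //.
by case: eps Him Hre => a b /= -> .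
Qed.

Lemma leC_real (eps : K) : 0 <= eps -> eps = (complex.Re eps)%:C /\ 0 <= complex.Re eps.
Proof.
rewrite lecE /= => /andP[/eqP Him Hre]; split => //.
by case: eps Him Hre => a b /= -> .
Qed.

Lemma HasSumP (I : choiceType) (f : I -> K) s :
  HasSum f s <-> forall eps : R, 0 < eps -> exists F0 : seq I, forall F : seq I,
    uniq F -> {subset F0 <= F} -> nc (\sum_(x <- F) f x - s) < eps.
Proof.
split.
- move=> H eps e0; have := H eps%:C; rewrite ltcR => /(_ e0) [F0 HF0].
  exists F0 => F uF sF; have := HF0 F uF sF.
  by rewrite normcC ltcR.
- move=> H eps /ltC_real [-> e0]; have [F0 HF0] := H _ e0.
  exists F0 => F uF sF; by rewrite normcC ltcR; apply: HF0.
Qed.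


Lemma HasSum_unique (I : choiceType) (f : I -> K) s t :
  HasSum f s -> HasSum f t -> s = t.
Proof.
move=> /HasSumP Hs /HasSumP Ht; apply/eqP; rewrite -subr_eq0 -nc_eq0.
rewrite eq_le nc_ge0 andbT; apply/negP => /negP; rewrite -ltNge => hp.
have e0 : 0 < nc (s - t) / 2 by rewrite divr_gt0.
have [F0 H0] := Hs _ e0; have [F1 H1] := Ht _ e0.
set F := undup (F0 ++ F1).
have uF : uniq F by apply: undup_uniq.
have s0 : {subset F0 <= F} by move=> x hx; rewrite mem_undup mem_cat hx.
have s1 : {subset F1 <= F} by move=> x hx; rewrite mem_undup mem_cat hx orbT.
have := H0 F uF s0; have := H1 F uF s1.
set S := \sum_(x <- F) f x => h1 h0.
have : nc (s - t) < nc (s - t) / 2 + nc (s - t) / 2.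
  have h : nc (s - t) <= nc (s - S) + nc (S - t).
    by have := ncD (s - S) (S - t); rewrite addrA subrK.
  apply: le_lt_trans h _.
  by rewrite ncB; apply: ltrD.
by rewrite -splitr ltxx.
Qed.

Lemma sumG_eq (I : choiceType) (f : I -> K) s : HasSum f s -> sumG f = s.
Proof.
move=> H; rewrite /sumG; apply: xget_unique => // y Hy.
exact: HasSum_unique Hy H.
Qed.

Lemma HasSum_single (I : choiceType) (f : I -> K) (g : I) :
  (forall x, x != g -> f x = 0) -> HasSum f (f g).
Proof.
move=> Hf; apply/HasSumP => eps e0; exists [:: g] => F uF sF.
have gF : g \in F by apply: sF; rewrite inE.
rewrite (big_rem g gF) /= big1_seq ?addr0 ?subrr ?nc0 //.
move=> x /andP[_ hx]; apply: Hf; apply: contraTneq hx => ->.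
by rewrite mem_rem_uniqF.
Qed.

Lemma HasSum_add (I : choiceType) (f g : I -> K) s t :
  HasSum f s -> HasSum g t -> HasSum (fun x => f x + g x) (s + t).
Proof.
move=> /HasSumP Hs /HasSumP Ht; apply/HasSumP => eps e0.
have e2 : 0 < eps / 2 by rewrite divr_gt0.
have [F0 H0] := Hs _ e2; have [F1 H1] := Ht _ e2.
exists (F0 ++ F1) => F uF sF.
have s0 : {subset F0 <= F} by move=> x hx; apply: sF; rewrite mem_cat hx.
have s1 : {subset F1 <= F} by move=> x hx; apply: sF; rewrite mem_cat hx orbT.
rewrite big_split /= (splitr eps) opprD addrACA.
apply: le_lt_trans (ncD _ _) _.
by apply: ltrD; [apply: H0 | apply: H1].
Qed.

Lemma HasSum_scale (I : choiceType) (f : I -> K) s (c : K) :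
  HasSum f s -> HasSum (fun x => c * f x) (c * s).
Proof.
move=> /HasSumP Hs; apply/HasSumP => eps e0.
have e1 : 0 < eps / (nc c + 1) by rewrite divr_gt0 // ltr_wpDl // nc_ge0.
have [F0 H0] := Hs _ e1; exists F0 => F uF sF.
rewrite -mulr_sumr -mulrBr ncM.
have h : nc c * nc (\sum_(x <- F) f x - s) <= nc c * (eps / (nc c + 1)).
  by apply: ler_wpM2l; [apply: nc_ge0| apply/ltW/H0].
apply: le_lt_trans h _.
rewrite mulrA ltr_pdivrMr ?ltr_wpDl ?nc_ge0 //.
by rewrite mulrC ltr_pM2l // ltrDl.
Qed.

Lemma HasSum_reindex (I : choiceType) (f : I -> K) s (sg sg' : I -> I) :
  cancel sg sg' -> cancel sg' sg ->
  HasSum f s -> HasSum (fun x => f (sg x)) s.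
Proof.
move=> c1 c2 /HasSumP Hs; apply/HasSumP => eps e0.
have [F0 H0] := Hs _ e0; exists (map sg' F0) => F uF sF.
rewrite -(big_map sg xpredT f); apply: H0.
  by rewrite map_inj_uniq //; apply: can_inj c1.
move=> x hx; apply/mapP; exists (sg' x); last by rewrite c2.
by apply: sF; apply/mapP; exists x.
Qed.

Lemma sumG_reindex (I : choiceType) (f : I -> K) (sg sg' : I -> I) :
  cancel sg sg' -> cancel sg' sg ->
  sumG (fun x => f (sg x)) = sumG f.
Proof.
move=> c1 c2; rewrite /sumG; congr xget; apply/seteqP; split => s /= H.
- have := HasSum_reindex c2 c1 H.
  by have -> : (fun x => f (sg (sg' x))) = f by apply: funext=> x; rewrite c2.
- exact: HasSum_reindex c1 c2 H.
Qed.

Definition psums (I : eqType) (f : I -> R) : set R :=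
  [set x | exists F : seq I, uniq F /\ x = \sum_(i <- F) f i].

Lemma sub_sum_le (I : eqType) (f : I -> R) (F0 F : seq I) :
  (forall x, 0 <= f x) -> uniq F0 -> uniq F -> {subset F0 <= F} ->
  \sum_(i <- F0) f i <= \sum_(i <- F) f i.
Proof.
move=> f0 u0 u sF.
rewrite [X in _ <= X](bigID (fun i => i \in F0)) /=.
have -> : \sum_(i <- F | i \in F0) f i = \sum_(i <- F0) f i.
  rewrite -big_filter; apply: perm_big; apply: uniq_perm.
  - exact: filter_uniq.
  - exact: u0.
  move=> x; rewrite mem_filter; apply/andP/idP => [[]//|h]; split => //.
  exact: sF.
by rewrite lerDl sumr_ge0.
Qed.

Lemma psums_sup (I : choiceType) (f : I -> R) :
  (forall x, 0 <= f x) -> (exists B, forall F, uniq F -> \sum_(i <- F) f i <= B) ->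
  has_sup (psums f).
Proof.
move=> f0 [B HB]; split; first by exists 0, [::]; rewrite big_nil.
by exists B => x [F [uF ->]]; apply: HB.
Qed.

Lemma psums_le_sup (I : choiceType) (f : I -> R) :
  (forall x, 0 <= f x) -> (exists B, forall F, uniq F -> \sum_(i <- F) f i <= B) ->
  forall F, uniq F -> \sum_(i <- F) f i <= sup (psums f).
Proof.
move=> f0 hB F uF; apply: sup_upper_bound; first exact: psums_sup.
by exists F.
Qed.

Lemma sum_realC (I : Type) (F : seq I) (f : I -> R) :
  \sum_(i <- F) (f i)%:C = (\sum_(i <- F) f i)%:C.
Proof. by rewrite rmorph_sum. Qed.

Lemma HasSum_nonneg (I : choiceType) (f : I -> R) :
  (forall x, 0 <= f x) -> (exists B, forall F, uniq F -> \sum_(i <- F) f i <= B) ->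
  HasSum (fun x => (f x)%:C) (sup (psums f))%:C.
Proof.
move=> f0 hB; apply/HasSumP => eps e0.
have [_ [F0 [u0 ->]] hlt] := sup_adherent e0 (psums_sup f0 hB).
exists F0 => F uF sF.
rewrite sum_realC -rmorphB /= ncR.
have le1 := psums_le_sup f0 hB uF.
have le2 := sub_sum_le f0 u0 uF sF.
rewrite ler0_norm ?subr_le0 // opprB ltrBlDr addrC -ltrBlDr.
exact: lt_le_trans hlt le2.
Qed.

End Sums.


Section L1.
Variable R : realType.
Local Notation K := (complex R).

Definition bndsum (I : eqType) (b : I -> R) :=
  exists B : R, forall F : seq I, uniq F -> \sum_(i <- F) b i <= B.

Lemma Re_le_nc (z : K) : `|complex.Re z| <= nc z.
Proof. by rewrite -lecR -normcC; apply: normc_ge_Re. Qed.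

Lemma Im_le_nc (z : K) : `|complex.Im z| <= nc z.
Proof.
have := Re_le_nc (z * 'i%C); rewrite ReiNIm normrN ncM.
have hi : nc (R:=R) 'i%C = 1 by rewrite /nc /= expr0n /= expr1n add0r sqrtr1.
rewrite hi.
by rewrite mulr1.
Qed.

Lemma bndsum_dom (I : eqType) (b c : I -> R) :
  (forall x, c x <= b x) -> bndsum b -> bndsum c.
Proof.
move=> h [B HB]; exists B => F uF; apply: le_trans (HB F uF).
by apply: ler_sum => i _; apply: h.
Qed.

Lemma HasSum_real (I : choiceType) (r : I -> R) (b : I -> R) :
  (forall x, `|r x| <= b x) -> bndsum b -> exists s, HasSum (fun x => (r x)%:C) s.
Proof.
move=> hr hb.
pose p1 x := (r x + `|r x|) / 2; pose p2 x := (`|r x| - r x) / 2.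
have hn x : - `|r x| <= r x <= `|r x|.
  by rewrite -ler_norml.
have p10 x : 0 <= p1 x by have := hn x; rewrite /p1 => /andP[? ?]; lra.
have p20 x : 0 <= p2 x by have := hn x; rewrite /p2 => /andP[? ?]; lra.
have p1b x : p1 x <= b x.
  by have := hn x; have := hr x; rewrite /p1 => ? /andP[? ?]; lra.
have p2b x : p2 x <= b x.
  by have := hn x; have := hr x; rewrite /p2 => ? /andP[? ?]; lra.
have h1 := HasSum_nonneg p10 (bndsum_dom p1b hb).
have h2 := HasSum_scale (-1) (HasSum_nonneg p20 (bndsum_dom p2b hb)).
have e : (fun x => (p1 x)%:C + -1 * (p2 x)%:C) = (fun x => (r x)%:C).
  apply: funext => x; rewrite mulN1r -rmorphB /=; congr (_%:C).
  by rewrite /p1 /p2; lra.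
by rewrite -e; eexists; apply: HasSum_add h1 h2.
Qed.

Lemma HasSum_dom (I : choiceType) (g : I -> K) (b : I -> R) :
  (forall x, nc (g x) <= b x) -> bndsum b -> exists s, HasSum g s.
Proof.
move=> hg hb.
have [s1 h1] := HasSum_real (fun x => le_trans (Re_le_nc (g x)) (hg x)) hb.
have [s2 h2] := HasSum_real (fun x => le_trans (Im_le_nc (g x)) (hg x)) hb.
exists (s1 + 'i * s2); have := HasSum_add h1 (HasSum_scale 'i h2).
have -> // : (fun x => (complex.Re (g x))%:C + 'i * (complex.Im (g x))%:C) = g.
by apply: funext => x; rewrite -complexE.
Qed.

Lemma HasSum_bound (I : choiceType) (g : I -> K) (b : I -> R) s :
  (forall x, nc (g x) <= b x) -> bndsum b -> HasSum g s ->
  nc s <= sup (psums b).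
Proof.
move=> hg hb /HasSumP hs; apply/ler_addgt0Pr => e e0.
have [F0 H0] := hs _ e0.
have sF : {subset F0 <= undup F0} by move=> x; rewrite mem_undup.
have := H0 (undup F0) (undup_uniq _) sF.
set S := \sum_(x <- _) g x => hS.
have b0 x : 0 <= b x by apply: le_trans (hg x); apply: nc_ge0.
have hS2 : nc S <= sup (psums b).
  apply: le_trans (nc_sum _ _) _; apply: le_trans (psums_le_sup b0 hb (undup_uniq F0)).
  by apply: ler_sum => i _.
have : nc s <= nc S + nc (S - s).
  by have := ncD S (s - S); rewrite addrC subrK ncB.
move=> h; apply: le_trans h _; apply: lerD => //; exact: ltW.
Qed.

Variable G : choiceType.

Lemma l1P (a : G -> K) : l1 a <-> bndsum (fun x => nc (a x)).
Proof.
split.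
- move=> [B HB]; exists (complex.Re B) => F uF; have := HB F uF.
  have -> : \sum_(x <- F) `|a x| = (\sum_(x <- F) nc (a x))%:C.
    by rewrite -sum_realC; apply: eq_bigr => i _; rewrite normcC.
  by rewrite lecE /= => /andP[].
- move=> [B HB]; exists B%:C => F uF.
  have -> : \sum_(x <- F) `|a x| = (\sum_(x <- F) nc (a x))%:C.
    by rewrite -sum_realC; apply: eq_bigr => i _; rewrite normcC.
  by rewrite lecR; apply: HB.
Qed.

Definition Na (a : G -> K) : R := sup (psums (fun x => nc (a x))).

Lemma l1norm_Na (a : G -> K) : l1 a -> l1norm a = (Na a)%:C.
Proof.
move=> /l1P hb; rewrite /l1norm.
have -> : (fun g => `|a g|) = (fun g => (nc (a g))%:C) by apply: funext => g; rewrite normcC.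
apply: sumG_eq; apply: HasSum_nonneg => // x; exact: nc_ge0.
Qed.

Lemma Na_ge (a : G -> K) F : l1 a -> uniq F -> \sum_(x <- F) nc (a x) <= Na a.
Proof. move=> /l1P hb uF; apply: psums_le_sup => // x; exact: nc_ge0. Qed.

Lemma Na_ge0 (a : G -> K) : l1 a -> 0 <= Na a.
Proof. by move=> h; have := @Na_ge a [::] h isT; rewrite big_nil. Qed.

Lemma Na_le (a : G -> K) (B : R) : l1 a ->
  (forall F, uniq F -> \sum_(x <- F) nc (a x) <= B) -> Na a <= B.
Proof.
move=> /l1P hb HB; apply: ge_sup; first by exists 0, [::]; rewrite big_nil.
by move=> x [F [uF ->]]; apply: HB.
Qed.

Lemma l1_dom (a b : G -> K) : l1 a -> (forall x, nc (b x) <= nc (a x)) -> l1 b.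
Proof. by move=> /l1P ha h; apply/l1P; apply: bndsum_dom ha. Qed.

Lemma l1_add (a b : G -> K) : l1 a -> l1 b -> l1 (a \+ b).
Proof.
move=> /l1P [A HA] /l1P [B HB]; apply/l1P; exists (A + B) => F uF.
apply: le_trans (_ : \sum_(x <- F) (nc (a x) + nc (b x)) <= _).
  by apply: ler_sum => i _; apply: ncD.
by rewrite big_split; apply: lerD; [apply: HA | apply: HB].
Qed.

Lemma l1_scale (c : K) (a : G -> K) : l1 a -> l1 (fun g => c * a g).
Proof.
move=> /l1P [A HA]; apply/l1P; exists (nc c * A) => F uF.
under eq_bigr do rewrite ncM.
by rewrite -mulr_sumr; apply: ler_wpM2l; [apply: nc_ge0 | apply: HA].
Qed.

Lemma l1_single (a : G -> K) (g : G) : (forall x, x != g -> a x = 0) -> l1 a.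
Proof.
move=> h; apply/l1P; exists (nc (a g)) => F uF.
case: (boolP (g \in F)) => gF.
  rewrite (big_rem g gF) /= big1_seq ?addr0 //.
  move=> x /andP[_ hx]; rewrite h ?nc0 //; apply: contraTneq hx => ->.
  by rewrite mem_rem_uniqF.
rewrite big1_seq ?nc_ge0 // => x /andP[_ hx]; rewrite h ?nc0 //.
by apply: contraNneq gF => <-.
Qed.

Lemma l1_delta (g : G) : l1 (delta R g).
Proof. by apply: (l1_single (g:=g)) => x; rewrite /delta => /negbTE ->. Qed.

Lemma HasSum_bl1 (c a : G -> K) (B : R) : 0 <= B ->
  (forall x, nc (c x) <= B) -> l1 a -> exists s, HasSum (fun x => c x * a x) s.
Proof.
move=> B0 hc ha; apply: (@HasSum_dom _ _ (fun x => B * nc (a x))).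
  move=> x; rewrite ncM; apply: ler_wpM2r; [exact: nc_ge0 | exact: hc].
have [A HA] := (l1P a).1 ha; exists (B * A) => F uF.
rewrite -mulr_sumr; apply: ler_wpM2l => //; exact: HA.
Qed.

End L1.


Section Grp.
Variables (G : choiceType) (gs : group_str G).
Local Notation mul := (gmul gs).
Local Notation inv := (ginv gs).
Local Notation e := (gone gs).

Lemma gmulxV x : mul x (inv x) = e.
Proof.
have h : mul (inv (inv x)) (inv x) = e by rewrite gmulV.
have h2 : mul x (inv x) = mul (mul (inv (inv x)) (inv x)) (mul x (inv x)).
  by rewrite h gmul1.
rewrite h2 -gmulA [mul (inv x) (mul x _)]gmulA gmulV gmul1.
by rewrite h.
Qed.

Lemma gmulx1 x : mul x e = x.
Proof. by rewrite -(gmulV gs x) gmulA gmulxV gmul1. Qed.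

Lemma gmulKx x y : mul (inv x) (mul x y) = y.
Proof. by rewrite gmulA gmulV gmul1. Qed.

Lemma gmulKVx x y : mul x (mul (inv x) y) = y.
Proof. by rewrite gmulA gmulxV gmul1. Qed.

Lemma gmulxK x y : mul (mul x y) (inv y) = x.
Proof. by rewrite -gmulA gmulxV gmulx1. Qed.

Lemma gmulxKV x y : mul (mul x (inv y)) y = x.
Proof. by rewrite -gmulA gmulV gmulx1. Qed.

Lemma ginv1 : inv e = e.
Proof. by rewrite -[inv e]gmulx1 gmulV. Qed.

Lemma gmulI x y z : mul x y = mul x z -> y = z.
Proof. by move=> h; rewrite -(gmulKx x y) h gmulKx. Qed.

Lemma gmulIr x y z : mul y x = mul z x -> y = z.
Proof. by move=> h; rewrite -(gmulxK y x) h gmulxK. Qed.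

End Grp.

Section Module.
Variables (R : realType) (G : choiceType) (gs : group_str G) (w : G -> R).
Hypothesis hw : is_weight gs w.
Local Notation K := (complex R).
Local Notation mul := (gmul gs).
Local Notation inv := (ginv gs).
Local Notation e := (gone gs).

Lemma w_gt0 x : 0 < w x.
Proof. by case: hw. Qed.

Lemma Omega_gt0 x y : 0 < Omega gs w x y.
Proof. by rewrite /Omega divr_gt0 ?mulr_gt0 ?w_gt0. Qed.

Lemma Omega_le1 x y : Omega gs w x y <= 1.
Proof.
case: hw => _ hs _.
by rewrite /Omega ler_pdivrMr ?mulr_gt0 ?w_gt0 // mul1r.
Qed.

Lemma Omega_e x : Omega gs w e x = 1.
Proof.
case: hw => h0 _ he.
by rewrite /Omega gmul1 he mul1r divff // gt_eqF.
Qed.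

Lemma pair_delta (f : G -> K) g : pair f (delta R g) = f g.
Proof.
rewrite /pair.
have -> : f g = f g * delta R g g by rewrite /delta eqxx mulr1.
apply: sumG_eq; apply: HasSum_single => x hx.
by rewrite /delta (negbTE hx) mulr0.
Qed.

Lemma conv_delta_r (b : G -> K) h :
  conv gs w b (delta R h) =
  fun k => b (mul k (inv h)) * (Omega gs w (mul k (inv h)) h)%:C.
Proof.
apply: funext => k; rewrite /conv.
set g0 := mul k (inv h).
have hg0 : mul (inv g0) k = h.
  by apply: (@gmulI _ gs g0); rewrite gmulKVx /g0 gmulxKV.
have -> : b g0 * (Omega gs w g0 h)%:C =
   b g0 * delta R h (mul (inv g0) k) * (Omega gs w g0 (mul (inv g0) k))%:C.
  by rewrite hg0 /delta eqxx mulr1.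
apply: sumG_eq; apply: HasSum_single => x hx.
rewrite /delta; case: eqP => [hxk|]; last by rewrite mulr0 mul0r.
exfalso; move/negP: hx; apply; apply/eqP.
have hk : k = mul x h by rewrite -hxk gmulKVx.
by rewrite /g0 hk gmulxK.
Qed.

Lemma act_c0_delta (mu : G -> K) h : act_c0 gs w (delta R h) mu e = mu h.
Proof.
rewrite /act_c0 conv_delta_r /pair.
have -> : mu h = mu h * (delta R e (mul h (inv h)) * (Omega gs w (mul h (inv h)) h)%:C).
  by rewrite gmulxV /delta eqxx Omega_e mul1r mulr1.
apply: sumG_eq; apply: HasSum_single => x hx.
rewrite /delta; case: eqP => [hxk|]; last by rewrite mul0r mulr0.
exfalso; move/negP: hx; apply; apply/eqP.
by rewrite -(gmulxKV gs x h) hxk gmul1.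
Qed.

End Module.


Section Ops.
Variables (R : realType) (G : choiceType).
Local Notation K := (complex R).

Lemma c0P (I : choiceType) (f : I -> K) :
  c0 f <-> forall eps : R, 0 < eps -> finite_set [set i | eps <= nc (f i)].
Proof.
split => h eps.
- move=> e0; have := h eps%:C; rewrite ltcR => /(_ e0).
  by congr finite_set; apply/seteqP; split => x /=; rewrite normcC lecR.
- move=> /ltC_real [-> e0]; have := h _ e0.
  by congr finite_set; apply/seteqP; split => x /=; rewrite normcC lecR.
Qed.

Lemma c0_single (f : G -> K) s : (forall x, x != s -> f x = 0) -> c0 f.
Proof.
move=> hf; apply/c0P => eps e0; apply: (sub_finite_set _ (finite_seq [:: s])).
move=> x /= hx; rewrite inE; apply/negP => /negP /hf hx0.
by move: hx; rewrite hx0 nc0 leNgt e0.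
Qed.

Lemma c0_add (f g : G -> K) : c0 f -> c0 g -> c0 (f \+ g).
Proof.
move=> /c0P hf /c0P hg; apply/c0P => eps e0.
have e2 : 0 < eps / 2 by rewrite divr_gt0.
have hU : finite_set ([set i | eps / 2 <= nc (f i)] `|` [set i | eps / 2 <= nc (g i)]).
  by rewrite finite_setU; split; [apply: hf | apply: hg].
apply: (sub_finite_set _ hU).
move=> x /= hx; apply: contrapT => /not_orP [h1 h2].
move/negP: h1; rewrite -ltNge => h1; move/negP: h2; rewrite -ltNge => h2.
have := ncD (f x) (g x); move: hx; lra.
Qed.

Lemma c0_scale (c : K) (f : G -> K) : c0 f -> c0 (fun x => c * f x).
Proof.
move=> /c0P hf; apply/c0P => eps e0.
have e1 : 0 < eps / (nc c + 1) by rewrite divr_gt0 // ltr_wpDl // nc_ge0.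
apply: (sub_finite_set _ (hf _ e1)) => x /= hx.
rewrite ler_pdivrMr ?ltr_wpDl ?nc_ge0 //; apply: le_trans hx _.
rewrite ncM mulrC ler_wpM2l ?nc_ge0 // lerDl //.
Qed.

Lemma op_bound_real (U : (G -> K) -> (G -> K)) D :
  op_bound U D -> forall a, l1 a -> forall s, nc (U a s) <= nc D * Na a.
Proof.
move=> hU a ha s; have := hU a ha s; rewrite (l1norm_Na ha) normcC => h.
have h0 : 0 <= (nc (U a s))%:C by rewrite lecR nc_ge0.
have : `|D * (Na a)%:C| = D * (Na a)%:C by rewrite ger0_norm //; apply: le_trans h.
rewrite normrM normcC [`|_%:C|]normcC ncR ger0_norm ?Na_ge0 // => hD.
by rewrite -lecR rmorphM /= hD.
Qed.

Lemma op_boundR (U : (G -> K) -> (G -> K)) (d : R) :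
  (forall a, l1 a -> forall s, nc (U a s) <= d * Na a) -> op_bound U d%:C.
Proof.
move=> h a ha s; rewrite (l1norm_Na ha) normcC -rmorphM lecR; exact: h.
Qed.


Lemma bnd_add (T S : (G -> K) -> (G -> K)) :
  is_bounded_op T -> is_bounded_op S -> is_bounded_op (fun a => T a \+ S a).
Proof.
move=> [Tl Ts Tc [DT hT]] [Sl Ss Sc [DS hS]]; split.
- move=> a b ha hb; rewrite Tl // Sl //; apply: funext => x /=.
  by rewrite addrACA.
- move=> c a ha; rewrite Ts // Ss //; apply: funext => x /=; by rewrite mulrDr.
- by move=> a ha; apply: c0_add; [apply: Tc | apply: Sc].
- exists (DT + DS) => a ha s /=; rewrite mulrDl.
  by apply: le_trans (ler_normD _ _) _; apply: lerD; [apply: hT | apply: hS].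
Qed.

Lemma bnd_scale (c : K) (T : (G -> K) -> (G -> K)) :
  is_bounded_op T -> is_bounded_op (fun a g => c * T a g).
Proof.
move=> [Tl Ts Tc [DT hT]]; split.
- move=> a b ha hb; rewrite Tl //; apply: funext => x /=; by rewrite mulrDr.
- move=> k a ha; rewrite Ts //; apply: funext => x /=; by rewrite mulrCA.
- by move=> a ha; apply: c0_scale; apply: Tc.
- exists (`|c| * DT) => a ha s /=; rewrite normrM -mulrA.
  by apply: ler_wpM2l => //; apply: hT.
Qed.

Lemma bnd_ext (T1 T2 : (G -> K) -> (G -> K)) :
  is_bounded_op T2 -> (forall a, l1 a -> T1 a = T2 a) -> is_bounded_op T1.
Proof.
move=> [Tl Ts Tc [DT hT]] he; split.
- by move=> a b ha hb; rewrite !he //; [apply: Tl | apply: l1_add].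
- by move=> c a ha; rewrite !he //; [apply: Ts | apply: l1_scale].
- by move=> a ha; rewrite he //; apply: Tc.
- by exists DT => a ha s; rewrite he //; apply: hT.
Qed.

Definition Row (s : G) (c : G -> K) : (G -> K) -> (G -> K) :=
  fun a g => if g == s then sumG (fun u => c u * a u) else 0.

Definition bndc (c : G -> K) (B : R) := forall u, nc (c u) <= B.

Lemma Row_add (c : G -> K) (B : R) a b : 0 <= B -> bndc c B -> l1 a -> l1 b ->
  sumG (fun u => c u * (a \+ b) u) = sumG (fun u => c u * a u) + sumG (fun u => c u * b u).
Proof.
move=> B0 hc ha hb.
have [sa Ha] := HasSum_bl1 B0 hc ha; have [sb Hb] := HasSum_bl1 B0 hc hb.
rewrite (sumG_eq Ha) (sumG_eq Hb); apply: sumG_eq.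
have := HasSum_add Ha Hb.
by have -> : (fun x => c x * a x + c x * b x) = (fun u => c u * (a \+ b) u)
  by apply: funext => x /=; rewrite mulrDr.
Qed.

Lemma Row_scale (c : G -> K) (B : R) (k : K) a : 0 <= B -> bndc c B -> l1 a ->
  sumG (fun u => c u * (k * a u)) = k * sumG (fun u => c u * a u).
Proof.
move=> B0 hc ha.
have [sa Ha] := HasSum_bl1 B0 hc ha.
rewrite (sumG_eq Ha); apply: sumG_eq.
have := HasSum_scale k Ha.
by have -> : (fun x => k * (c x * a x)) = (fun u => c u * (k * a u))
  by apply: funext => x /=; rewrite mulrCA.
Qed.

Lemma Row_nc (c : G -> K) (B : R) a : 0 <= B -> bndc c B -> l1 a ->
  nc (sumG (fun u => c u * a u)) <= B * Na a.
Proof.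
move=> B0 hc ha.
have [sa Ha] := HasSum_bl1 B0 hc ha; rewrite (sumG_eq Ha).
have hb : bndsum (fun x => B * nc (a x)).
  have [A HA] := (l1P a).1 ha; exists (B * A) => F uF.
  rewrite -mulr_sumr; apply: ler_wpM2l => //; exact: HA.
apply: le_trans (HasSum_bound _ hb Ha) _.
  by move=> x; rewrite ncM; apply: ler_wpM2r; [apply: nc_ge0 | apply: hc].
apply: ge_sup; first by exists 0, [::]; rewrite big_nil.
move=> x [F [uF ->]]; rewrite -mulr_sumr; apply: ler_wpM2l => //.
exact: Na_ge.
Qed.

Lemma Row_bounded s c (B : R) : 0 <= B -> bndc c B ->
  is_bounded_op (Row s c) /\ op_bound (Row s c) B%:C.
Proof.
move=> B0 hc.
have ob : op_bound (Row s c) B%:C.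
  apply: op_boundR => a ha g; rewrite /Row; case: (g == s).
    exact: Row_nc.
  by rewrite nc0 mulr_ge0 ?Na_ge0.
split => //; split.
- move=> a b ha hb; apply: funext => g; rewrite /Row /=.
  case: (g == s); last by rewrite addr0.
  exact: (Row_add B0 hc ha hb).
- move=> k a ha; apply: funext => g; rewrite /Row.
  case: (g == s); last by rewrite mulr0.
  exact: (Row_scale k B0 hc ha).
- move=> a ha; apply: (c0_single (s := s)) => x hx.
  by rewrite /Row (negbTE hx).
- by exists B%:C.
Qed.

End Ops.


Section Phi.
Variables (R : realType) (G : choiceType) (gs : group_str G) (w : G -> R).
Variable phi : ((G -> complex R) -> (G -> complex R)) -> (G -> complex R).
Hypothesis hw : is_weight gs w.
Hypothesis hphi : is_bounded_module_hom gs w phi.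
Local Notation K := (complex R).
Local Notation e := (gone gs).

Lemma phi_add (T S : (G -> K) -> (G -> K)) :
  is_bounded_op T -> is_bounded_op S -> phi (fun a => T a \+ S a) = phi T \+ phi S.
Proof. by case: hphi => _ h _ _ _; apply: h. Qed.

Lemma phi_scale (c : K) (T : (G -> K) -> (G -> K)) :
  is_bounded_op T -> phi (fun a g => c * T a g) = (fun g => c * phi T g).
Proof. by case: hphi => _ _ h _ _; apply: h. Qed.

Lemma phi_c0 (T : (G -> K) -> (G -> K)) : is_bounded_op T -> c0 (phi T).
Proof. by case: hphi => h _ _ _ _; apply: h. Qed.

Lemma phi_bound : exists C : R, 0 <= C /\ forall T (d : R), is_bounded_op T -> 0 <= d ->
  op_bound T d%:C -> forall g, nc (phi T g) <= C * d.
Proof.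
case: hphi => _ _ _ [C0 hC] _.
have hc0 : bndc (fun _ : G => 0 : K) 1 by move=> u; rewrite nc0.
have [b1 o1] := Row_bounded e ler01 hc0.
have := hC _ _ b1 (ler01) o1 e; rewrite mulr1 => h0.
have C00 : 0 <= C0 by apply: le_trans h0.
have [hC0 hRe] := leC_real C00.
exists (complex.Re C0); split => // T d bT d0 oT g.
have := hC _ _ bT _ oT g; rewrite lecR => /(_ d0).
by rewrite normcC hC0 -rmorphM lecR.
Qed.

Lemma phi_ext (T1 T2 : (G -> K) -> (G -> K)) :
  is_bounded_op T1 -> is_bounded_op T2 -> (forall a, l1 a -> T1 a = T2 a) ->
  phi T1 = phi T2.
Proof.
move=> b1 b2 he.
have bm := bnd_scale (-1) b2.
have bN := bnd_add b1 bm.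
have oN : op_bound (fun a => T1 a \+ (fun g => -1 * T2 a g)) (0 : R)%:C.
  apply: op_boundR => a ha s /=; rewrite he // mulN1r subrr nc0 mul0r.
  by [].
have [C [C0 hC]] := phi_bound.
have h0 g := hC _ _ bN (lexx 0) oN g.
rewrite phi_add // phi_scale // in h0.
apply: funext => g; move: (h0 g); rewrite mulr0 /=.
move=> h; apply/eqP; rewrite -subr_eq0 -nc_eq0 eq_le nc_ge0 andbT.
by rewrite mulN1r in h.
Qed.

Lemma phi_shift (X : (G -> K) -> (G -> K)) h :
  is_bounded_op X -> phi (act_B gs w (delta R h) X) e = phi X h.
Proof.
move=> bX; case: hphi => _ _ _ _ hm.
by rewrite hm //; [apply: act_c0_delta | apply: l1_delta].
Qed.

End Phi.


Section Seq.
Variables (G : choiceType) (gs : group_str G).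
Hypothesis inf : forall L : seq G, exists x, x \notin L.
Local Notation mul := (gmul gs).
Local Notation inv := (ginv gs).
Local Notation e := (gone gs).

Definition Dl (L : seq G) := [seq mul a (inv b) | a <- L, b <- L].
Definition bad (L : seq G) :=
  [seq mul d l | d <- Dl L, l <- L] ++ [seq mul (inv d) l | d <- Dl L, l <- L].
Definition next (L : seq G) : G := xchoose (inf (bad L)).

Fixpoint hs (n : nat) : seq G :=
  match n with 0 => [::] | n'.+1 => rcons (hs n') (next (hs n')) end.
Definition hseq (n : nat) : G := next (hs n).

Lemma hsE n : hs n = map hseq (iota 0 n).
Proof.
elim: n => [//|n IH].
change (hs n.+1) with (rcons (hs n) (next (hs n))).
by rewrite -addn1 iotaD map_cat add0n /= cats1 -IH.
Qed.

Lemma h_in i n : (i < n)%N -> hseq i \in hs n.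
Proof. by move=> lt; rewrite hsE; apply: map_f; rewrite mem_iota. Qed.

Lemma h_notbad n : hseq n \notin bad (hs n).
Proof. exact: (xchooseP (inf (bad (hs n)))). Qed.

Lemma h_avoid1 n a b l : (a < n)%N -> (b < n)%N -> (l < n)%N ->
  hseq n != mul (mul (hseq a) (inv (hseq b))) (hseq l).
Proof.
move=> ha hb hl; apply: contraNneq (h_notbad n) => ->.
rewrite mem_cat; apply/orP; left; apply/allpairsP.
exists (mul (hseq a) (inv (hseq b)), hseq l) => /=; split => //; last exact: h_in.
by apply/allpairsP; exists (hseq a, hseq b); split => //=; apply: h_in.
Qed.

Lemma h_avoid2 n a b l : (a < n)%N -> (b < n)%N -> (l < n)%N ->
  hseq n != mul (inv (mul (hseq a) (inv (hseq b)))) (hseq l).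
Proof.
move=> ha hb hl; apply: contraNneq (h_notbad n) => ->.
rewrite mem_cat; apply/orP; right; apply/allpairsP.
exists (mul (hseq a) (inv (hseq b)), hseq l) => /=; split => //; last exact: h_in.
by apply/allpairsP; exists (hseq a, hseq b); split => //=; apply: h_in.
Qed.

Lemma h_inj : injective hseq.
Proof.
suff H : forall i n, (i < n)%N -> hseq n != hseq i.
  move=> i j hij; case: (ltngtP i j) => // [lt|lt].
  - by move: (H _ _ lt); rewrite hij eqxx.
  - by move: (H _ _ lt); rewrite hij eqxx.
move=> i n lt; have := h_avoid1 lt lt lt.
by rewrite gmulxV gmul1.
Qed.

Lemma h_max_key a b c d : a != b ->
  mul (hseq a) (inv (hseq b)) = mul (hseq c) (inv (hseq d)) ->
  ~ (maxn c d < maxn a b)%N.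
Proof.
move=> nab heq hlt.
have hc : (c < maxn a b)%N by apply: leq_ltn_trans hlt; apply: leq_maxl.
have hd : (d < maxn a b)%N by apply: leq_ltn_trans hlt; apply: leq_maxr.
case: (ltngtP a b) nab => // hab _.
- rewrite (maxn_idPr (ltnW hab)) in hc hd.
  have := h_avoid2 hc hd hab; rewrite -heq.
  by rewrite -{2}(gmulxKV gs (hseq a) (hseq b)) gmulKx eqxx.
- rewrite (maxn_idPl (ltnW hab)) in hc hd.
  have := h_avoid1 hc hd hab; rewrite -heq.
  by rewrite gmulxKV eqxx.
Qed.

Lemma h_max a b c d : a != b -> c != d ->
  mul (hseq a) (inv (hseq b)) = mul (hseq c) (inv (hseq d)) ->
  maxn a b = maxn c d.
Proof.
move=> nab ncd heq; apply/eqP; rewrite eqn_leq; apply/andP; split.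
- by rewrite leqNgt; apply/negP => /(h_max_key nab heq).
- by rewrite leqNgt; apply/negP => /(h_max_key ncd (esym heq)).
Qed.

End Seq.


Lemma sum_ind (F : realType) (I : Type) (r : seq I) (a : pred I) :
  \sum_(j <- r) ((a j)%:R : F) = (count a r)%:R.
Proof.
rewrite -sum1_count natr_sum [RHS]big_mkcond /=; apply: eq_bigr => j _.
by case: (a j).
Qed.

Lemma count_le1 (I : eqType) (Q : pred I) (s : seq I) : uniq s ->
  (forall x y, Q x -> Q y -> x = y) -> (count Q s <= 1)%N.
Proof.
elim: s => [//|x s IH] /= /andP[xs us] hQ.
case: (boolP (Q x)) => Qx /=; last by rewrite add0n; apply: IH.
suff -> : count Q s = 0%N by [].
apply/eqP; rewrite -leqn0 leqNgt -has_count; apply/hasP => [[y ys Qy]].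
by move: xs; rewrite (hQ _ _ Qx Qy) ys.
Qed.

Section Key.
Variables (R : realType) (G : choiceType) (gs : group_str G) (w : G -> R).
Variable phi : ((G -> complex R) -> (G -> complex R)) -> (G -> complex R).
Hypothesis hw : is_weight gs w.
Hypothesis hphi : is_bounded_module_hom gs w phi.
Hypothesis inf : forall L : seq G, exists x, x \notin L.
Local Notation K := (complex R).
Local Notation mul := (gmul gs).
Local Notation inv := (ginv gs).
Local Notation e := (gone gs).
Local Notation h := (hseq gs inf).

Definition Eop (s t : G) : (G -> K) -> (G -> K) :=
  fun a g => if g == s then a t else 0.

Lemma E_Row s t : Eop s t = Row s (delta R t).
Proof.
apply: funext => a; apply: funext => g; rewrite /Eop /Row; case: (g == s) => //.
have -> : a t = delta R t t * a t by rewrite /delta eqxx mul1r.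
apply/esym/sumG_eq; apply: HasSum_single => x hx.
by rewrite /delta (negbTE hx) mul0r.
Qed.

Lemma w_submul x y : w (mul x y) <= w x * w y.
Proof. by case: hw. Qed.

Variable t : G.

Definition rho (u : G) : K :=
  if `[< exists n, u = mul t (h n) >] then ((Omega gs w t (mul (inv t) u))^-1)%:C else 0.

Definition Bt := w t * w (inv t).

Lemma Bt_ge0 : 0 <= Bt.
Proof. by rewrite mulr_ge0 // ltW // (w_gt0 hw). Qed.

Lemma rho_bnd : bndc rho Bt.
Proof.
move=> u; rewrite /rho; case: asboolP => _; last by rewrite nc0 Bt_ge0.
rewrite ncR ger0_norm; last by rewrite invr_ge0 ltW // (Omega_gt0 hw).
rewrite /Omega invf_div gmulKVx ler_pdivrMr ?(w_gt0 hw) //.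
rewrite /Bt -mulrA ler_wpM2l //; [exact: ltW (w_gt0 hw t) | exact: w_submul].
Qed.

Definition rhoh (g : G) (b : G) : K := rho (mul b g) * (Omega gs w b g)%:C.

Lemma rhoh_bnd g : bndc (rhoh g) Bt.
Proof.
move=> b; rewrite /rhoh ncM ncR ger0_norm; last exact: ltW (Omega_gt0 hw b g).
have h1 := rho_bnd (mul b g); have h2 := Omega_le1 hw b g.
have h3 := nc_ge0 (rho (mul b g)); have h4 := ltW (Omega_gt0 hw b g).
apply: le_trans (ler_wpM2l h3 h2) _; rewrite mulr1; exact: h1.
Qed.

Lemma act_Row s c g :
  act_B gs w (delta R g) (Row s c) = Row s (fun b => c (mul b g) * (Omega gs w b g)%:C).
Proof.
apply: funext => a; apply: funext => k; rewrite /act_B /Row.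
case: (k == s) => //; rewrite conv_delta_r.
have c1 : cancel (fun x => mul x g) (fun x => mul x (inv g)) by move=> x; apply: gmulxK.
have c2 : cancel (fun x => mul x (inv g)) (fun x => mul x g) by move=> x; apply: gmulxKV.
rewrite -(sumG_reindex _ c1 c2).
congr sumG; apply: funext => b /=; rewrite gmulxK.
by rewrite -mulrA [a b * _]mulrC.
Qed.


Variable s : G.
Definition Lc (c : G -> K) : K := phi (Row s c) e.

Lemma Lc_add c1 c2 B1 B2 : 0 <= B1 -> 0 <= B2 -> bndc c1 B1 -> bndc c2 B2 ->
  Lc (fun u => c1 u + c2 u) = Lc c1 + Lc c2.
Proof.
move=> B10 B20 h1 h2.
have h12 : bndc (fun u => c1 u + c2 u) (B1 + B2).
  by move=> u; apply: le_trans (ncD _ _) _; apply: lerD.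
have [b1 _] := Row_bounded s B10 h1; have [b2 _] := Row_bounded s B20 h2.
have [b12 _] := Row_bounded s (addr_ge0 B10 B20) h12.
rewrite /Lc.
have -> : phi (Row s c1) e + phi (Row s c2) e = (phi (Row s c1) \+ phi (Row s c2)) e by [].
rewrite -(phi_add hphi b1 b2).
apply: (f_equal (fun F => F e)); apply: (phi_ext hphi b12 (bnd_add b1 b2)) => a ha.
apply: funext => g; rewrite /Row /=; case: (g == s); last by rewrite addr0.
have [x1 H1] := HasSum_bl1 B10 h1 ha; have [x2 H2] := HasSum_bl1 B20 h2 ha.
rewrite (sumG_eq H1) (sumG_eq H2); apply: sumG_eq.
have := HasSum_add H1 H2.
have -> // : (fun x => c1 x * a x + c2 x * a x) = (fun u => (c1 u + c2 u) * a u).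
by apply: funext => x; rewrite mulrDl.
Qed.

Lemma Lc_scale k c B : 0 <= B -> bndc c B -> Lc (fun u => k * c u) = k * Lc c.
Proof.
move=> B0 hc.
have hkc : bndc (fun u => k * c u) (nc k * B).
  by move=> u; rewrite ncM; apply: ler_wpM2l; [apply: nc_ge0 | apply: hc].
have [b1 _] := Row_bounded s B0 hc.
have [b2 _] := Row_bounded s (mulr_ge0 (nc_ge0 k) B0) hkc.
rewrite /Lc; have := phi_scale hphi k b1 => /(f_equal (fun F => F e)) /= <-.
apply: (f_equal (fun F => F e)); apply: (phi_ext hphi b2 (bnd_scale k b1)) => a ha.
apply: funext => g; rewrite /Row /=; case: (g == s); last by rewrite mulr0.
have [x1 H1] := HasSum_bl1 B0 hc ha.
rewrite (sumG_eq H1); apply: sumG_eq.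
have := HasSum_scale k H1.
have -> // : (fun x => k * (c x * a x)) = (fun u => k * c u * a u).
by apply: funext => x; rewrite mulrA.
Qed.

Lemma bndc_sum (I : Type) (r : seq I) (f : I -> G -> K) B :
  (forall i, bndc (f i) B) -> bndc (fun u => \sum_(i <- r) f i u) ((size r)%:R * B).
Proof.
move=> hf u; apply: le_trans (nc_sum _ _) _.
elim: r => [|i r IH]; first by rewrite big_nil mul0r.
rewrite big_cons /= -add1n natrD mulrDl mul1r; apply: lerD => //; exact: hf.
Qed.

Lemma Lc_sum (I : Type) (r : seq I) (f : I -> G -> K) B : 0 <= B ->
  (forall i, bndc (f i) B) ->
  Lc (fun u => \sum_(i <- r) f i u) = \sum_(i <- r) Lc (f i).
Proof.
move=> B0 hf; elim: r => [|i r IH].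
  rewrite big_nil.
  have h0 : bndc (fun _ : G => 0 : K) 0 by move=> u; rewrite nc0.
  have -> : (fun u => \sum_(i <- [::]) f i u) = (fun u => 0 * (fun _ => 0 : K) u).
    by apply: funext=> u; rewrite big_nil mul0r.
  by rewrite (Lc_scale 0 (lexx 0) h0) mul0r.
rewrite big_cons -IH -(Lc_add B0 _ (hf i) (bndc_sum r hf)); last first.
  by rewrite mulr_ge0.
by congr Lc; apply: funext => u; rewrite big_cons.
Qed.

Lemma Lc_rhoh g : Lc (rhoh g) = phi (Row s rho) g.
Proof.
have [bX _] := Row_bounded s Bt_ge0 rho_bnd.
by rewrite /Lc -(phi_shift hw hphi g bX) act_Row.
Qed.

Lemma Lc_delta : Lc (delta R t) = phi (Eop s t) e.
Proof. by rewrite /Lc E_Row. Qed.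


Lemma rho_le (u : G) : nc (rho u) <= (`[< exists n, u = mul t (h n) >])%:R * Bt.
Proof.
have := rho_bnd u; rewrite /rho; case: asboolP => _; first by rewrite mul1r.
by rewrite mul0r nc0.
Qed.

Lemma comb N b : b != t -> \sum_(0 <= k < N) nc (rho (mul b (h k))) <= 2 * Bt.
Proof.
move=> nbt.
pose P := fun k => `[< exists n, mul b (h k) = mul t (h n) >].
have h1 : \sum_(0 <= k < N) nc (rho (mul b (h k))) <= \sum_(0 <= k < N) (P k)%:R * Bt.
  by apply: ler_sum => k _; apply: rho_le.
apply: le_trans h1 _.
rewrite -mulr_suml sum_ind ler_wpM2r ?Bt_ge0 // ler_nat.
have hy : forall k n, mul b (h k) = mul t (h n) ->
    mul (h n) (inv (h k)) = mul (inv t) b /\ n != k.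
  move=> k n E.
  have e1 : mul (mul (inv t) b) (h k) = h n by rewrite -gmulA E gmulKx.
  split; first by rewrite -e1 gmulxK.
  apply/eqP => nk; move: e1; rewrite nk -{2}(gmul1 gs (h k)) => /gmulIr ye.
  by move/eqP: nbt; apply; rewrite -(gmulKVx gs t b) ye gmulx1.
case: (pselect (exists k0 n0, mul b (h k0) = mul t (h n0))) => [[k0 [n0 E0]]|none]; last first.
  rewrite (@eq_count _ _ pred0) ?count_pred0 // => k /=.
  by apply/negbTE/asboolPn => -[n En]; apply: none; exists k, n.
set p := maxn n0 k0.
have [y0 nk0] := hy _ _ E0.
pose Q := fun k => mul b (h k) == mul t (h p).
have sub : forall k, P k -> (k == p) || Q k.
  move=> k /asboolP [n En]; have [yk nk] := hy _ _ En.
  have hm : maxn n k = p.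
    by rewrite /p; apply: (h_max (gs:=gs) (inf:=inf) nk nk0); rewrite yk y0.
  case: (leqP n k) => hnk.
    by move: hm; rewrite (maxn_idPr hnk) => ->; rewrite eqxx.
  move: hm; rewrite (maxn_idPl (ltnW hnk)) => hn.
  by apply/orP; right; rewrite /Q -hn En.
apply: leq_trans (sub_count sub _) _.
have u := iota_uniq 0 (N - 0).
apply: leq_trans (_ : _ <= count (pred1 p) (index_iota 0 N) + count Q (index_iota 0 N))%N _.
  by rewrite -count_predUI leq_addr.
rewrite -[2%N]/(1 + 1)%N; apply: leq_add; apply: count_le1 => // x z.
  by move=> /eqP -> /eqP ->.
move=> /eqP ex /eqP ez; apply: (h_inj (gs := gs) (inf := inf)).
by apply: (@gmulI _ gs b); rewrite ex ez.
Qed.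

Lemma nc_invn N : nc ((N%:R)^-1 : K) = (N%:R)^-1.
Proof.
have -> : ((N%:R)^-1 : K) = ((N%:R)^-1 : R)%:C by rewrite fmorphV rmorph_nat.
by rewrite ncR ger0_norm // invr_ge0.
Qed.

Lemma cN_bnd N : (0 < N)%N ->
  bndc (fun b => N%:R^-1 * (\sum_(0 <= k < N) rhoh (h k) b) + -1 * delta R t b)
       (N%:R^-1 * (2 * Bt)).
Proof.
move=> N0 b; case: (eqVneq b t) => [->|nbt].
  have -> : \sum_(0 <= k < N) rhoh (h k) t = N%:R.
    transitivity (\sum_(0 <= k < N) (1 : K)); last by rewrite sumr_const_nat subn0.
    apply: eq_bigr => k _; rewrite /rhoh /rho; case: asboolP => [_|[]]; last by exists k.
    rewrite gmulKx -rmorphM /= mulVf //; apply: lt0r_neq0; exact: (Omega_gt0 hw).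
  rewrite mulVf ?pnatr_eq0 -?lt0n // /delta eqxx mulr1 addrN nc0.
  apply: mulr_ge0; [by rewrite invr_ge0 | apply: mulr_ge0 => //; exact: Bt_ge0].
rewrite /delta (negbTE nbt) mulr0 addr0 ncM nc_invn ler_wpM2l ?invr_ge0 //.
apply: le_trans (nc_sum _ _) _; apply: le_trans (comb N nbt).
apply: ler_sum => k _; rewrite /rhoh ncM ncR ger0_norm; last exact: ltW (Omega_gt0 hw _ _).
have h3 := nc_ge0 (rho (mul b (h k))); have h2 := Omega_le1 hw b (h k).
by apply: le_trans (ler_wpM2l h3 h2) _; rewrite mulr1.
Qed.

Lemma bndc_scale (k : K) (c : G -> K) B : bndc c B -> bndc (fun u => k * c u) (nc k * B).
Proof. by move=> hc u; rewrite ncM ler_wpM2l ?nc_ge0. Qed.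

Lemma bndc_delta : bndc (delta R t) 1.
Proof. by move=> u; rewrite /delta; case: (u == t); rewrite ?nc1 ?nc0. Qed.

Lemma phiX_sum N (eps M : R) (Lb : seq G) : 0 <= eps -> 0 <= M ->
  (forall g, g \notin Lb -> nc (phi (Row s rho) g) < eps) ->
  (forall g, nc (phi (Row s rho) g) <= M) ->
  \sum_(0 <= k < N) nc (phi (Row s rho) (h k)) <= N%:R * eps + (size Lb)%:R * M.
Proof.
move=> e0 M0 hs hM.
have h1 : \sum_(0 <= k < N) nc (phi (Row s rho) (h k)) <=
   \sum_(0 <= k < N) (eps + (h k \in Lb)%:R * M).
  apply: ler_sum => k _; case: (boolP (h k \in Lb)) => hk.
    by rewrite mul1r ler_wpDl.
  by rewrite mul0r addr0 ltW // hs.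
apply: le_trans h1 _.
rewrite big_split /= sumr_const_nat subn0 mulr_natl lerD2l -mulr_suml sum_ind.
rewrite ler_wpM2r // ler_nat.
rewrite -(count_map (hseq gs inf) (mem Lb)) -size_filter.
apply: uniq_leq_size.
  by apply: filter_uniq; rewrite map_inj_uniq ?iota_uniq //; apply: h_inj.
by move=> x; rewrite mem_filter => /andP[].
Qed.

Lemma key : phi (Eop s t) e = 0.
Proof.
have [bX oX] := Row_bounded s Bt_ge0 rho_bnd.
have [C [C0 hC]] := phi_bound hphi.
apply/eqP; rewrite -nc_eq0 eq_le nc_ge0 andbT.
apply/ler_addgt0Pr => eps e0; rewrite add0r.
have e2 : 0 < eps / 2 by rewrite divr_gt0.
have := (c0P _).1 (phi_c0 hphi bX) _ e2; case/finite_seqP => Lb hLb.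
have hsmall g : g \notin Lb -> nc (phi (Row s rho) g) < eps / 2.
  move=> gL; rewrite ltNge; apply/negP => hg.
  have hA := congr1 (fun A : set G => A g) hLb.
  have : ([set` Lb]%classic : set G) g by rewrite -hA.
  by rewrite /= (negbTE gL).
have hM g : nc (phi (Row s rho) g) <= C * Bt := hC _ _ bX Bt_ge0 oX g.
have CB0 : 0 <= C * Bt by rewrite mulr_ge0 ?Bt_ge0.
set A := (size Lb)%:R * (C * Bt) + C * (2 * Bt).
have B20 : 0 <= 2 * Bt by apply: mulr_ge0; [exact: ler0n | exact: Bt_ge0].
have A0 : 0 <= A by apply: addr_ge0; apply: mulr_ge0 => //; exact: ler0n.
set N := (Num.bound (A / (eps / 2))).+1.
have N0 : (0 < N)%N by [].
have hN : A / (eps / 2) < N%:R.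
  apply: lt_trans (archi_boundP _) _; first by rewrite divr_ge0 // ltW.
  by rewrite ltr_nat.
set cN := fun b => N%:R^-1 * (\sum_(0 <= k < N) rhoh (h k) b) + -1 * delta R t b.
have hcN := cN_bnd N0.
have hS := @bndc_sum nat (index_iota 0 N) (fun k => rhoh (h k)) Bt (fun k => rhoh_bnd (h k)).
have Lform : Lc cN = N%:R^-1 * \sum_(0 <= k < N) phi (Row s rho) (h k)
                     + -1 * phi (Eop s t) e.
  have hs0 : 0 <= (size (index_iota 0 N))%:R * Bt by apply: mulr_ge0 => //; exact: Bt_ge0.
  rewrite /cN (Lc_add _ _ (bndc_scale _ hS) (bndc_scale _ bndc_delta)); first last.
  - by apply: mulr_ge0 => //; apply: nc_ge0.
  - by apply: mulr_ge0 => //; apply: nc_ge0.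
  rewrite (Lc_scale _ hs0 hS).
  rewrite (Lc_scale _ ler01 bndc_delta) Lc_delta (@Lc_sum nat (index_iota 0 N) (fun k => rhoh (h k)) Bt Bt_ge0 (fun k => rhoh_bnd (h k))).
  by under eq_bigr do rewrite Lc_rhoh.
have cB0 : 0 <= N%:R^-1 * (2 * Bt) by apply: mulr_ge0 => //; rewrite invr_ge0.
have [bc oc] := Row_bounded s cB0 hcN.
have hLc : nc (Lc cN) <= C * (N%:R^-1 * (2 * Bt)) := hC _ _ bc cB0 oc e.
have hE : phi (Eop s t) e = N%:R^-1 * \sum_(0 <= k < N) phi (Row s rho) (h k) - Lc cN.
  by rewrite Lform opprD addrA subrr add0r mulN1r opprK.
have hsum := phiX_sum N (ltW e2) CB0 hsmall hM.
have hn : (0 : R) < N%:R by rewrite ltr0n.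
rewrite hE; apply: le_trans (ncD _ _) _; rewrite ncN ncM nc_invn.
have h1 : nc (\sum_(0 <= k < N) phi (Row s rho) (h k)) <= N%:R * (eps / 2) + (size Lb)%:R * (C * Bt).
  by apply: le_trans (nc_sum _ _) hsum.
have h2 : A < N%:R * (eps / 2) by rewrite -ltr_pdivrMr // mulrC.
have h3 : N%:R^-1 * nc (\sum_(0 <= k < N) phi (Row s rho) (h k)) + nc (Lc cN)
          <= N%:R^-1 * (N%:R * (eps / 2) + A).
  rewrite mulrDr [N%:R^-1 * A]mulrDr addrA; apply: lerD.
    rewrite -mulrDr; apply: ler_wpM2l; first by rewrite invr_ge0 ltW.
    by apply: le_trans h1 _; rewrite lerD2l.
  by rewrite mulrCA.
apply: le_trans h3 _.
have h4 : N%:R^-1 * A <= eps / 2.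
  by rewrite mulrC ler_pdivrMr // mulrC; exact: ltW h2.
rewrite mulrDr mulKf ?gt_eqF //.
by apply: le_trans (lerD (lexx _) h4) _; rewrite -splitr.
Qed.

End Key.


Section Entry.
Variables (R : realType) (G : choiceType).
Local Notation K := (complex R).

Lemma lin_list (U : (G -> K) -> (G -> K)) (a : G -> K) (F : seq G) s :
  is_bounded_op U -> l1 a -> uniq F ->
  U (fun x => if x \in F then a x else 0) s = \sum_(t <- F) a t * U (delta R t) s.
Proof.
case=> Ul Us _ _ ha; elim: F => [|t F IH] /=.
  rewrite big_nil.
  have -> : (fun x : G => if x \in [::] then a x else 0) = (fun g => 0 * delta R s g).
    by apply: funext => x; rewrite in_nil mul0r.
  by move=> _; rewrite Us; [exact: mul0r | exact: l1_delta].
move=> /andP[tF uF]; rewrite big_cons -IH //.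
have hl : l1 (fun x => if x \in F then a x else 0).
  apply: (l1_dom (b := fun x => if x \in F then a x else 0) ha) => x.
  by case: (x \in F); [exact: lexx | rewrite nc0 nc_ge0].
transitivity (U ((fun x => a t * delta R t x) \+ (fun x => if x \in F then a x else 0)) s).
  congr (U _ s); apply: funext => x /=; rewrite in_cons /delta; case: (eqVneq x t) => [->|nxt] /=.
    by rewrite (negbTE tF) mulr1 addr0.
  by rewrite mulr0 add0r.
rewrite Ul //=; last by apply: l1_scale; apply: l1_delta.
by rewrite Us //; apply: l1_delta.
Qed.

Lemma entry_bound (U : (G -> K) -> (G -> K)) (eps : R) :
  is_bounded_op U -> 0 <= eps -> (forall s t, nc (U (delta R t) s) <= eps) ->
  op_bound U eps%:C.
Proof.
move=> bU e0 he; have [Ul Us Uc [D hD]] := bU.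
have hDr := op_bound_real hD.
apply: op_boundR => a ha s.
apply/ler_addgt0Pr => eta eta0.
have D1 : 0 < nc D + 1 by rewrite ltr_wpDl ?nc_ge0.
set eta' := eta / (nc D + 1).
have eta'0 : 0 < eta' by rewrite divr_gt0.
have a0 x : 0 <= nc (a x) by apply: nc_ge0.
have [_ [F [uF ->]] hx] := sup_adherent eta'0 (psums_sup a0 ((l1P a).1 ha)).
pose aF := fun x => if x \in F then a x else 0.
pose ar := fun x => if x \in F then 0 else a x.
have la : a = aF \+ ar.
  by apply: funext => x; rewrite /aF /ar /=; case: (x \in F); rewrite ?addr0 ?add0r.
have hlF : l1 aF.
  apply: (l1_dom (b := aF) ha) => x; rewrite /aF.
  by case: (x \in F); [exact: lexx | rewrite nc0 nc_ge0].
have hlr : l1 ar.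
  apply: (l1_dom (b := ar) ha) => x; rewrite /ar.
  by case: (x \in F); [rewrite nc0 nc_ge0 | exact: lexx].
rewrite {1}la Ul //=.
apply: le_trans (ncD _ _) _.
have h1 : nc (U aF s) <= eps * Na a.
  rewrite (lin_list s bU ha uF).
  apply: le_trans (nc_sum _ _) _.
  apply: le_trans (_ : \sum_(t <- F) nc (a t) * eps <= _).
    by apply: ler_sum => t _; rewrite ncM; apply: ler_wpM2l.
  by rewrite -mulr_suml mulrC ler_wpM2l // Na_ge.
have h2 : Na ar <= eta'.
  apply: Na_le => // L uL.
  have -> : \sum_(x <- L) nc (ar x) = \sum_(x <- L | x \notin F) nc (a x).
    rewrite [RHS]big_mkcond /=; apply: eq_bigr => x _; rewrite /ar.
    by case: (x \in F); rewrite ?nc0.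
  rewrite -big_filter.
  have hle : \sum_(x <- filter (fun x => x \notin F) L) nc (a x) + \sum_(x <- F) nc (a x) <= Na a.
    rewrite -big_cat; apply: Na_ge => //; rewrite cat_uniq filter_uniq // uF andbT /=.
    by apply/hasPn => x xF; rewrite mem_filter negb_and xF.
  move: hle hx; set S1 := \sum_(x <- _ | _) _; set S2 := \sum_(x <- F) _.
  rewrite -/(Na a) => ??; lra.
have h3 : nc (U ar s) <= eta.
  apply: le_trans (hDr _ hlr s) _.
  apply: le_trans (_ : nc D * eta' <= _).
    by apply: ler_wpM2l; [apply: nc_ge0 | exact: h2].
  rewrite /eta' mulrA ler_pdivrMr // mulrDr mulr1 [eta * _]mulrC lerDl; exact: ltW.
by apply: lerD.
Qed.

End Entry.

Lemma TL_prop (R : realType) (G : choiceType) (gs : group_str G) (w : G -> R)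
  (phi : ((G -> complex R) -> (G -> complex R)) -> (G -> complex R))
  (hw : is_weight gs w) (hphi : is_bounded_module_hom gs w phi)
  (inf : forall L : seq G, exists x, x \notin L)
  (T0 : (G -> complex R) -> (G -> complex R)) (b0 : is_bounded_op T0)
  (m : (G * G)%type -> complex R) (L : seq (G * G)%type) :
  is_bounded_op (fun a g => \sum_(p <- L) m p * Eop p.1 p.2 a g) /\
  phi (fun a g => \sum_(p <- L) m p * Eop p.1 p.2 a g) (gone gs) = 0.
Proof.
elim: L => [|p L [bL pL]].
  have -> : (fun (a : G -> complex R) (g : G) => \sum_(p <- [::]) m p * Eop p.1 p.2 a g)
       = (fun a g => 0 * T0 a g).
    by apply: funext => a; apply: funext => g; rewrite big_nil mul0r.
  split; first exact: bnd_scale.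
  by rewrite (phi_scale hphi 0 b0) mul0r.
have bE : is_bounded_op (@Eop R G p.1 p.2).
  by rewrite E_Row; case: (Row_bounded p.1 ler01 (bndc_delta R p.2)).
have -> : (fun a g => \sum_(q <- p :: L) m q * Eop q.1 q.2 a g) =
   (fun a => (fun g => m p * Eop p.1 p.2 a g) \+
             (fun g => \sum_(q <- L) m q * Eop q.1 q.2 a g)).
  by apply: funext => a; apply: funext => g; rewrite big_cons.
have b1 := bnd_scale (m p) bE.
split; first exact: bnd_add.
rewrite (phi_add hphi b1 bL) /= pL addr0 (phi_scale hphi _ bE).
by rewrite (key hw hphi inf p.2 p.1) mulr0.
Qed.

Local Close Scope complex_scope.

Theorem mainTheorem6 (R : realType) (G : choiceType) (gs : group_str G)
    (w : G -> R) (phi : ((G -> complex R) -> (G -> complex R)) -> (G -> complex R)) :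
  is_weight gs w ->
  ~ strongly_non_amenable gs w ->
  is_bounded_module_hom gs w phi ->
  let M := fun T => pair (phi T) (delta R (gone gs)) in
  forall T : (G -> complex R) -> (G -> complex R),
    is_bounded_op T -> c0 (op_matrix T) -> M T = 0.
Proof.
move=> hw hns hphi M T bT hc; rewrite /M pair_delta.
have inf : forall L : seq G, exists x, x \notin L.
  move=> L; apply: contrapT => hL; apply: hns => eps' _.
  apply: (sub_finite_set _ (finite_seq L)) => x _ /=.
  apply: contrapT => hx; apply: hL; exists x; apply/negP => hxL; exact: hx.
have [C [C0 hC]] := phi_bound hphi.
apply/eqP; rewrite -nc_eq0 eq_le nc_ge0 andbT; apply/ler_addgt0Pr => eps e0.
rewrite add0r.
have C1 : 0 < C + 1 by rewrite ltr_wpDl.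
set ep := eps / (C + 1).
have ep0 : 0 < ep by rewrite divr_gt0.
have := (c0P _).1 hc _ ep0; case/finite_seqP => Lp0 hLp.
set Lp := undup Lp0.
have uLp : uniq Lp by apply: undup_uniq.
have memLp q : (q \in Lp) = `[< ep <= nc (op_matrix T q) >].
  rewrite mem_undup; have hA := congr1 (fun A : set (G * G) => A q) hLp.
  move: hA => /= hA; apply/idP/asboolP => hq.
    by rewrite hA.
  by rewrite -hA.
set m := op_matrix T.
have [bL pL] := TL_prop hw hphi inf bT m Lp.
set TL := fun a g => \sum_(p <- Lp) m p * Eop p.1 p.2 a g.
have bm := bnd_scale (-1) bL.
have bU := bnd_add bT bm.
have hUe : phi (fun a => T a \+ (fun g => -1 * TL a g)) (gone gs) = phi T (gone gs).
  by rewrite (phi_add hphi bT bm) (phi_scale hphi _ bL) /= pL mulr0 addr0.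
rewrite -hUe.
have ent : forall s t, nc ((fun a => T a \+ (fun g => -1 * TL a g)) (delta R t) s) <= ep.
  move=> s t /=.
  have hE : forall p : G * G, Eop p.1 p.2 (delta R t) s = (p == (s, t))%:R.
    move=> [p1 p2]; rewrite /Eop /delta /= xpair_eqE eq_sym [p2 == t]eq_sym.
    by case: (p1 == s); case: (t == p2).
  have mst : m (s, t) = T (delta R t) s by rewrite /m /op_matrix pair_delta.
  rewrite /TL /=; under eq_bigr do rewrite hE.
  case: (boolP ((s, t) \in Lp)) => hin.
    rewrite (big_rem (s, t) hin) /= eqxx mulr1 big1_seq; last first.
      move=> q /andP[_ hq]; case: eqP => [eq|_]; last by rewrite mulr0.
      by move: hq; rewrite eq mem_rem_uniqF.
    by rewrite addr0 mst mulN1r subrr nc0 ltW.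
  rewrite big1_seq; last first.
    move=> q /andP[_ hq]; case: eqP => [eq|_]; last by rewrite mulr0.
    by move: hin; rewrite -eq hq.
  rewrite mulr0 addr0 -mst; move: hin; rewrite memLp => /asboolPn.
  by rewrite /m => /negP; rewrite -ltNge => /ltW.
have oU := entry_bound bU (ltW ep0) ent.
apply: le_trans (hC _ _ bU (ltW ep0) oU (gone gs)) _.
rewrite /ep mulrA ler_pdivrMr // mulrDr mulr1 mulrC lerDl; exact: ltW.
Qed.
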